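(* Let $r\ge3$ be an integer, let $\mathscr C$ be a class of graphs with sub-exponential expansion, and let $g$ be an integer such that every graph in $\mathscr C$ with girth at least $g$ is $(r+1)$-path degenerate. Then every graph $G\in\mathscr C$ with maximum degree $\Delta\ge3$ and $\mathrm{girth}(G)\ge g$ that is not a forest satisfies $a'_r(G)=\max\{\Delta,r\}$.
   Context: Graphs are finite and simple; the girth is the length of a shortest cycle. For an integer $r\ge3$, $a'_r(G)$ is the minimum number of colors in a proper edge coloring of $G$ such that every cycle $C$ of $G$ receives at least $\min\{|C|,r\}$ distinct colors. A strict ear of a graph $G$ is a path of $G$ whose internal vertices all have degree $2$ in $G$ and whose two endpoints are distinct. For an integer $p\ge1$, a $p$-reduction of $G$ is the deletion of either an isolated vertex, or a vertex of degree $1$, or the internal vertices of a strict ear of $G$ of length at least $p$. A graph is $p$-path degenerate if it can be reduced to the empty graph by a sequence of $p$-reductions. A class $\mathscr C$ has sub-exponential expansion if $\sup\{\nabla_r(G):G\in\mathscr C\}=2^{o(r)}$, where $\nabla_r(G)$ is the maximum of $|E(H)|/|V(H)|$ over nonempty shallow minors $H$ of $G$ at depth $r$ (minors obtained by contracting vertex-disjoint subgraphs of radius at most $r$ and deleting vertices and edges). *)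

(* Defs.v *)
From Stdlib Require Import Rdefinitions Raxioms Rpower.
From mathcomp Require Import all_boot.

Set Implicit Arguments.
Unset Strict Implicit.
Unset Printing Implicit Defensive.

Definition sgraph (n : nat) (e : rel 'I_n) : Prop :=
  symmetric e /\ irreflexive e.

Definition graph_class := forall n : nat, rel 'I_n -> Prop.

Section Graphs.
Variables (n : nat) (e : rel 'I_n).

Definition is_cycle (c : seq 'I_n) : bool := ucycleb e c && (3 <= size c).

Definition deg (v : 'I_n) : nat := #|[set u | e v u]|.
Definition maxdeg : nat := \max_(v : 'I_n) deg v.

(* girth(G) >= g (vacuous for forests, whose girth is infinite) *)
Definition girth_ge (g : nat) : Prop :=
  forall c, is_cycle c -> g <= size c.

Definition forest : Prop := forall c, ~~ is_cycle c.

Definition cycle_colors (col : 'I_n -> 'I_n -> nat) (c : seq 'I_n) : seq nat :=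
  [seq col p.1 p.2 | p <- zip c (rot 1 c)].

Definition r_acyclic_coloring (r k : nat) (col : 'I_n -> 'I_n -> nat) : Prop :=
  [/\ forall x y, e x y -> col x y = col y x,
      forall x y, e x y -> col x y < k,
      forall x y z, e x y -> e x z -> y != z -> col x y != col x z
    & forall c, is_cycle c ->
        minn (size c) r <= size (undup (cycle_colors col c))].

Definition r_colorable (r k : nat) : Prop :=
  exists col, r_acyclic_coloring r k col.

Definition arc_index_is (r k : nat) : Prop :=
  r_colorable r k /\ forall k', r_colorable r k' -> k <= k'.

Definition deg_in (S : {set 'I_n}) (v : 'I_n) : nat := #|[set u in S | e v u]|.
Definition erel_in (S : {set 'I_n}) : rel 'I_n :=
  fun x y => [&& x \in S, y \in S & e x y].

Definition p_reduction (p : nat) (S S' : {set 'I_n}) : Prop :=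
  (exists2 v, v \in S & deg_in S v <= 1 /\ S' = S :\ v)
  \/
  (exists x y (s : seq 'I_n),
     [/\ x != y,
         path (erel_in S) x (rcons s y) && (x \in S),
         uniq (x :: rcons s y) &&
         all (fun v => deg_in S v == 2) s,
         p <= (size s).+1
       & S' = S :\: [set v in s]]).

Inductive reducible (p : nat) : {set 'I_n} -> Prop :=
  | red_empty : reducible p set0
  | red_step S S' : p_reduction p S S' -> reducible p S' -> reducible p S.

Definition path_degenerate (p : nat) : Prop := reducible p [set: 'I_n].

(* H (on 'I_m) is a shallow minor of G at depth d: disjoint branch sets
   B i, each containing a centre c i from which every vertex of B i is at
   distance <= d inside G[B i], and each edge of H is realised by an edge
   of G between the corresponding branch sets. *)
Definition shallow_minor (d m : nat) (eH : rel 'I_m) : Prop :=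
  sgraph eH /\
  exists (B : 'I_m -> {set 'I_n}) (ctr : 'I_m -> 'I_n),
    [/\ forall i j, i != j -> [disjoint B i & B j],
        forall i, ctr i \in B i,
        forall i v, v \in B i ->
          exists s : seq 'I_n, [/\ size s <= d, path e (ctr i) s,
                                   all (mem (B i)) s & last (ctr i) s = v]
      & forall i j, eH i j -> exists x y, [/\ x \in B i, y \in B j & e x y]].

Definition nedges (m : nat) (eH : rel 'I_m) : nat :=
  #|[set p : 'I_m * 'I_m | eH p.1 p.2 && (p.1 < p.2)]|.

(* nabla_d(G) <= x : every nonempty shallow minor at depth d has
   |E(H)| / |V(H)| <= x *)
Definition nabla_le (d : nat) (x : R) : Prop :=
  forall m (eH : rel 'I_m), 0 < m -> shallow_minor d eH ->
    Rle (Rdiv (INR (nedges eH)) (INR m)) x.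

End Graphs.

(* sup_{G in C} nabla_d(G) = 2^{o(d)} *)
Definition subexp_expansion (C : graph_class) : Prop :=
  forall eps : R, Rlt R0 eps ->
    exists d0 : nat, forall d, d0 <= d ->
      forall n (e : rel 'I_n), C n e ->
        nabla_le e d (Rpower (INR 2) (Rmult eps (INR d))).

(* Main.v *)
Require Import Defs.
From Stdlib Require Import Rdefinitions Raxioms Rpower Classical.
From mathcomp Require Import all_boot zify.
Set Implicit Arguments. Unset Strict Implicit. Unset Printing Implicit Defensive.

Lemma zip_next (T : eqType) (c : seq T) p :
  uniq c -> p \in zip c (rot 1 c) -> p.1 \in c /\ p.2 = next c p.1.
Proof.
case: c => [|y t] // Uc /(nthP (y, y)) [i].
rewrite size_zip size_rot minnn => Hi <-.
rewrite rot1_cons nth_zip ?size_rcons //= nth_rcons_default.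
split; first by rewrite mem_nth.
rewrite -[next_at _ _ _ _]/(next (y :: t) _) next_nth mem_nth // index_uniq //.
Qed.

Lemma next_zip (T : eqType) (c : seq T) u :
  u \in c -> (u, next c u) \in zip c (rot 1 c).
Proof.
case: c => [|y t] // Hu.
apply/(nthP (y, y)); exists (index u (y :: t)).
  by rewrite size_zip size_rot minnn index_mem.
rewrite rot1_cons nth_zip ?size_rcons //= nth_rcons_default nth_index //.
by rewrite -[next_at _ _ _ _]/(next (y :: t) _) next_nth Hu.
Qed.

Lemma prev_zip (T : eqType) (c : seq T) u :
  uniq c -> u \in c -> (prev c u, u) \in zip c (rot 1 c).
Proof.
move=> Uc Hu; have := @next_zip T c (prev c u); rewrite next_prev // mem_prev.
by apply.
Qed.

Lemma prev_at_last (T : eqType) (u z : T) t :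
  u \notin t -> prev_at u u z t = last z t.
Proof.
elim: t z => [|y t IH] z /=; first by rewrite eqxx.
by rewrite inE negb_or => /andP[/negbTE -> /IH].
Qed.

Lemma next_neq_prev (T : eqType) (c : seq T) u :
  uniq c -> 3 <= size c -> u \in c -> next c u != prev c u.
Proof.
move=> Uc Sc Hu.
set k := index u c.
have Hk : k < size c by rewrite index_mem.
have Hr : rot k c = u :: (drop k.+1 c ++ take k c).
  by rewrite /rot (drop_nth u Hk) nth_index.
rewrite -(next_rot k Uc) -(prev_rot k Uc) Hr.
have : uniq (rot k c) by rewrite rot_uniq.
have : size (rot k c) = size c by rewrite size_rot.
rewrite Hr; case: (drop _ _ ++ _) => [|w [|z t]] /=.
- by move=> E; rewrite -E in Sc.
- by move=> E; rewrite -E in Sc.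
move=> _ /and4P[Hu1 Hw _ _].
rewrite !inE !negb_or in Hu1; case/and3P: Hu1 => Huw Huz Hut.
rewrite eqxx (negbTE Huw) (negbTE Huz) prev_at_last //.
by apply: contraNneq Hw => ->; apply: mem_last.
Qed.


Lemma propagate (Q : nat -> Prop) m i : 1 <= i <= m -> Q i ->
  (forall j, 1 <= j <= m -> Q j -> Q j.-1 /\ Q j.+1) ->
  forall j, j <= m.+1 -> Q j.
Proof.
move=> /andP[i1 im] Qi step.
have up : forall d, i + d <= m.+1 -> Q (i + d).
  elim=> [|d IH] Hd; first by rewrite addn0.
  rewrite addnS in Hd *; apply: (proj2 (step (i + d) _ (IH (ltnW Hd)))).
  by rewrite (leq_trans i1 (leq_addr _ _)) -ltnS.
have down : forall d, d <= i -> Q (i - d).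
  elim=> [|d IH] Hd; first by rewrite subn0.
  rewrite subnS; apply: (proj1 (step (i - d) _ (IH (ltnW Hd)))).
  by rewrite subn_gt0 Hd (leq_trans (leq_subr _ _) im).
move=> j Hj; case: (leqP i j) => Hij.
  by rewrite -(subnKC Hij); apply: up; rewrite subnKC.
by rewrite -(subKn (ltnW Hij)); apply: down; rewrite leq_subr.
Qed.

Lemma cyc_facts n (f : rel 'I_n) c :
  is_cycle f c -> [/\ uniq c, cycle f c & 3 <= size c].
Proof. by rewrite /is_cycle /ucycleb => /andP[/andP[-> ->] ->]. Qed.

Lemma cyc_nbrs n (e : rel 'I_n) S c u :
  is_cycle (erel_in e S) c -> u \in c ->
  [/\ next c u != prev c u, next c u \in S, prev c u \in S,
      e u (next c u) & e (prev c u) u].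
Proof.
move=> /cyc_facts [Uc Cc Sc] Hu.
have := next_cycle Cc Hu; have := prev_cycle Cc Hu.
rewrite /erel_in => /and3P[-> _ ->] /and3P[_ -> ->].
by rewrite next_neq_prev.
Qed.

Lemma cyc_deg2 n (e : rel 'I_n) S c u : symmetric e ->
  is_cycle (erel_in e S) c -> u \in c -> 2 <= deg_in e S u.
Proof.
move=> Se Hc Hu; have [Hnp HnS HpS Hn Hp] := cyc_nbrs Hc Hu.
rewrite /deg_in; have -> : 2 = #|[set next c u; prev c u]| by rewrite cards2 Hnp.
apply: subset_leq_card; apply/subsetP => z; rewrite !inE.
by case/orP=> /eqP ->; rewrite ?HnS ?Hn // HpS Se Hp.
Qed.

Lemma nbr_cases n (e : rel 'I_n) S c u w : symmetric e ->
  is_cycle (erel_in e S) c -> u \in c -> deg_in e S u = 2 ->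
  w \in S -> e u w -> w = next c u \/ w = prev c u.
Proof.
move=> Se Hc Hu Hd HwS Hw; have [Hnp HnS HpS Hn Hp] := cyc_nbrs Hc Hu.
have E : [set z in S | e u z] == [set next c u; prev c u].
  rewrite eqEcard cards2 Hnp -/(deg_in e S u) Hd andbT.
  apply/subsetP => z; rewrite !inE => /andP[zS euz].
  apply: contraT; rewrite negb_or => /andP[z1 z2].
  have : 3 <= deg_in e S u.
    rewrite /deg_in.
    have -> : 3 = #|z |: [set next c u; prev c u]|.
      by rewrite cardsU1 cards2 Hnp !inE (negbTE z1) (negbTE z2).
    apply: subset_leq_card; apply/subsetP => v; rewrite !inE.
    by case/or3P=> /eqP ->; rewrite ?zS ?euz ?HnS ?Hn ?HpS // Se.
  by rewrite Hd.
have : w \in [set z in S | e u z] by rewrite inE HwS Hw.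
by rewrite (eqP E) !inE => /orP[] /eqP ->; [left|right].
Qed.

Lemma ear_in_cycle n (e : rel 'I_n) S x y s c : symmetric e ->
  path (erel_in e S) x (rcons s y) -> all (fun v => deg_in e S v == 2) s ->
  is_cycle (erel_in e S) c -> (exists2 w, w \in s & w \in c) ->
  {subset (x :: rcons s y) <= c}.
Proof.
move=> Se Hp Hdeg Hc [w ws wc].
set P := x :: rcons s y.
have Pn : forall k, k < size s -> nth x P k.+1 = nth x s k.
  by move=> k Hk; rewrite /= nth_rcons Hk.
have Ed : forall k, k <= size s -> erel_in e S (nth x P k) (nth x P k.+1).
  by move=> k Hk; move/(pathP x): Hp; apply; rewrite size_rcons ltnS.
have Hq : forall j, j <= (size s).+1 -> nth x P j \in c.
  apply: (@propagate (fun j => nth x P j \in c) (size s) (index w s).+1).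
  - by rewrite /= index_mem ws.
  - by rewrite Pn ?index_mem // nth_index.
  move=> j /andP[j1 jm] Hj.
  have Hu : nth x P j \in s.
    by rewrite -(prednK j1) Pn ?mem_nth // (leq_trans _ jm) // prednK.
  have Hd : deg_in e S (nth x P j) = 2 by apply/eqP; move/allP: Hdeg; apply.
  have HH : forall z, erel_in e S (nth x P j) z -> z \in c.
    move=> z /and3P[_ zS ez].
    by case: (nbr_cases Se Hc Hj Hd zS ez) => ->; rewrite ?mem_next ?mem_prev.
  split.
    apply: HH; have := Ed j.-1; rewrite prednK // => H.
    move: (H (leq_trans (leq_pred _) jm)) => /and3P[a b ee].
    by rewrite /erel_in a b Se.
  exact: HH (Ed j jm).
move=> v /(nthP x) [j Hj <-]; apply: Hq.
by move: Hj; rewrite /= size_rcons.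
Qed.

Lemma cyc_inS n (e : rel 'I_n) S c u :
  is_cycle (erel_in e S) c -> u \in c -> u \in S.
Proof.
move=> /cyc_facts [_ Cc _] Hu.
by have /and3P[] := next_cycle Cc Hu.
Qed.

Lemma cycle_restrict n (e : rel 'I_n) (S S' : {set 'I_n}) c :
  is_cycle (erel_in e S) c -> all (mem S') c -> is_cycle (erel_in e S') c.
Proof.
move=> Hc HS; have [Uc Cc Sc] := cyc_facts Hc.
rewrite /is_cycle /ucycleb Uc Sc !andbT.
apply: (sub_in_cycle (P := mem S')) HS Cc.
by move=> a b aS bS /and3P[_ _ ee]; rewrite /erel_in aS bS ee.
Qed.

Lemma cycle_long n (e : rel 'I_n) S p c : symmetric e ->
  reducible e p S -> is_cycle (erel_in e S) c -> p <= size c.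
Proof.
move=> Se Hr; elim: Hr c => [|{}S S' Hred _ IH] c Hc.
  have [_ _ Sc] := cyc_facts Hc.
  case: c Hc Sc => [|u c] // Hc _.
  by have [_ H _ _ _] := cyc_nbrs Hc (mem_head u c); rewrite inE in H.
have [Uc Cc Sc] := cyc_facts Hc.
case: (boolP (all (mem S') c)) => HS.
  by apply: IH; apply: cycle_restrict Hc HS.
have [w wc wS'] : exists2 w, w \in c & w \notin S'.
  by move/allPn: HS => [w wc /= wS']; exists w.
have wS : w \in S.
  exact: cyc_inS Hc wc.
case: Hred => [[v vS [Hd E]] | [x [y [s [xy /andP[Hp xS] /andP[Us Hdeg] Hps E]]]]].
  have wv : w = v by move: wS'; rewrite E !inE wS andbT negbK => /eqP.
  by have := cyc_deg2 Se Hc wc; rewrite wv => /leq_trans/(_ Hd).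
have ws : w \in s by move: wS'; rewrite E !inE wS andbT negbK.
have Hsub := ear_in_cycle Se Hp Hdeg Hc (ex_intro2 _ _ w ws wc).
have := uniq_leq_size Us Hsub; rewrite /= size_rcons => H.
by apply: leq_trans Hps (ltnW H).
Qed.


Lemma free_color (A : seq nat) K : size A < K -> exists2 a, a < K & a \notin A.
Proof.
move=> HA; case: (boolP (all (fun a => a \in A) (iota 0 K))) => H.
  have := uniq_leq_size (iota_uniq 0 K) (fun z Hz => allP H z Hz).
  by rewrite size_iota leqNgt HA.
by move/allPn: H => [a]; rewrite mem_iota add0n => Ha Hn; exists a.
Qed.

Lemma mod_inj a K i j : i < K -> j < K -> (a + i) %% K = (a + j) %% K -> i = j.
Proof.
move=> iK jK /eqP; rewrite eqn_modDl !modn_small // => /eqP //.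
Qed.

Lemma ear_colors K r m a b : 3 <= r -> r <= K -> r <= m.+1 -> a < K -> b < K ->
  exists f : nat -> nat,
  [/\ f 0 = a, f m.+1 = b, forall j, j < m.+2 -> f j < K,
      forall j, j < m.+1 -> f j != f j.+1
    & exists U : seq nat, [/\ uniq U, r <= size U &
                           {subset U <= [seq f j | j <- iota 0 m.+2]}]].
Proof.
move=> r3 rK rm aK bK.
have K0 : 0 < K by lia.
set R := [seq (a + j) %% K | j <- iota 0 m].
have UR : m <= K -> uniq R.
  move=> mK; rewrite map_inj_in_uniq ?iota_uniq // => i j.
  rewrite !mem_iota !add0n => Hi Hj; apply: mod_inj; lia.
have [c [cK c1 c2 c3]] : exists c, [/\ c < K, c != (a + m.-1) %% K, c != b &
                             m < r -> b \in R -> c \notin R].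
  case: (boolP ((m < r) && (b \in R))) => [/andP[mr bR] | H].
    have HR : size R < K by rewrite size_map size_iota; lia.
    have [c cK cR] := @free_color R K HR.
    exists c; split => //.
    - apply: contraNneq cR => ->; apply: map_f; rewrite mem_iota; lia.
    - by apply: contraNneq cR => ->.
  have H2 : size [:: (a + m.-1) %% K; b] < K by rewrite /=; lia.
  have [c cK cR] := @free_color _ K H2.
  exists c; split => //.
  - by apply: contraNneq cR => ->; rewrite mem_head.
  - by apply: contraNneq cR => ->; rewrite !inE eqxx orbT.
  - by move=> mr bR; move: H; rewrite mr bR.
pose f j := if j < m then (a + j) %% K else if j == m then c else b.
have fR : forall j, j < m -> f j = (a + j) %% K by move=> j Hj; rewrite /f Hj.
exists f; split.
- by rewrite fR ?addn0 ?modn_small //; lia.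
- by rewrite /f ltnNge leqnSn /= eqn_leq ltnn.
- move=> j _; rewrite /f; case: ifP => _; first by rewrite ltn_pmod.
  by case: ifP.
- move=> j Hj; rewrite /f.
  case: (ltnP j.+1 m) => H1.
    rewrite (ltnW H1); apply/eqP => E.
    have := @mod_inj (a + j) K 0 1; rewrite addn0 addn1 -addnS; lia.
  case: (ltnP j m) => H2.
    have -> : j = m.-1 by lia.
    by rewrite prednK ?eqxx 1?eq_sym //; lia.
  have -> : j = m by lia.
  by rewrite eqxx (_ : m.+1 == m = false) 1?eq_sym //; lia.
have sub : forall z, z \in R -> z \in [seq f j | j <- iota 0 m.+2].
  move=> z /mapP[j]; rewrite mem_iota add0n => Hj ->.
  by apply/mapP; exists j; rewrite ?mem_iota ?fR //; lia.
case: (leqP r m) => rm'.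
  exists [seq (a + j) %% K | j <- iota 0 r]; split.
  - rewrite map_inj_in_uniq ?iota_uniq // => i j.
    rewrite !mem_iota !add0n => Hi Hj; apply: mod_inj; lia.
  - by rewrite size_map size_iota.
  - move=> z /mapP[j]; rewrite mem_iota add0n => Hj ->.
    by apply/mapP; exists j; rewrite ?mem_iota ?fR //; lia.
have UR' := UR (ltnW (leq_trans rm' rK)).
case: (boolP (b \in R)) => bR.
  exists (rcons R c); split.
  - by rewrite rcons_uniq c3 // UR'.
  - rewrite size_rcons size_map size_iota; lia.
  - move=> z; rewrite mem_rcons inE => /orP[/eqP -> | /sub //].
    by apply/mapP; exists m; rewrite ?mem_iota /f ?ltnn ?eqxx //; lia.
exists (rcons R b); split.
- by rewrite rcons_uniq bR UR'.
- rewrite size_rcons size_map size_iota; lia.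
- move=> z; rewrite mem_rcons inE => /orP[/eqP -> | /sub //].
  apply/mapP; exists m.+1; rewrite ?mem_iota /f ?ltnNge ?leqnSn //=; first lia.
  by rewrite (_ : m.+1 == m = false) //; lia.
Qed.


Definition col_ok n (e : rel 'I_n) (S : {set 'I_n}) K r (col : 'I_n -> 'I_n -> nat) :=
  [/\ forall x y, erel_in e S x y -> col x y = col y x,
      forall x y, erel_in e S x y -> col x y < K,
      forall x y z, erel_in e S x y -> erel_in e S x z -> y != z -> col x y != col x z
    & forall c, is_cycle (erel_in e S) c -> r <= size (undup (cycle_colors col c))].

Definition acol n (e : rel 'I_n) (S : {set 'I_n}) (col : 'I_n -> 'I_n -> nat) u :=
  [seq col u w | w <- enum [set w in S | e u w]].

Lemma acol_mem n (e : rel 'I_n) (S : {set 'I_n}) (col : 'I_n -> 'I_n -> nat) u w :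
  w \in S -> e u w -> col u w \in acol e S col u.
Proof. by move=> wS euw; apply: map_f; rewrite mem_enum inE wS euw. Qed.

Lemma acol_size n (e : rel 'I_n) (S : {set 'I_n}) (col : 'I_n -> 'I_n -> nat) u : size (acol e S col u) = deg_in e S u.
Proof. by rewrite size_map -cardE. Qed.

Lemma cc_eq n (col col' : 'I_n -> 'I_n -> nat) c : uniq c ->
  (forall a b, a \in c -> b \in c -> col a b = col' a b) ->
  cycle_colors col c = cycle_colors col' c.
Proof.
move=> Uc H; rewrite /cycle_colors; apply/eq_in_map => p /(zip_next Uc) [p1 p2].
by apply: H; rewrite // p2 mem_next.
Qed.

Lemma cc_edge n (e : rel 'I_n) (S : {set 'I_n}) c (col : 'I_n -> 'I_n -> nat) u w : symmetric e ->
  is_cycle (erel_in e S) c -> u \in c -> deg_in e S u = 2 -> w \in S -> e u w ->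
  col u w = col w u -> col u w \in cycle_colors col c.
Proof.
move=> Se Hc Hu Hd wS euw Hs; have [Uc _ _] := cyc_facts Hc.
case: (nbr_cases Se Hc Hu Hd wS euw) => E.
  by rewrite E; apply: (map_f (fun p => col p.1 p.2) (next_zip Hu)).
by rewrite Hs E; apply: (map_f (fun p => col p.1 p.2) (prev_zip Uc Hu)).
Qed.

Lemma deg_lt n (e : rel 'I_n) (S S' : {set 'I_n}) u v : S' \subset S ->
  v \in S -> v \notin S' -> e u v -> deg_in e S' u < deg_in e S u.
Proof.
move=> sS vS vS' euv; apply: proper_card; rewrite properE; apply/andP; split.
  by apply/subsetP => w; rewrite !inE => /andP[/(subsetP sS) -> ->].
apply/subsetPn; exists v; first by rewrite inE vS euv.
by rewrite inE (negbTE vS').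
Qed.

Lemma nbr_uniq n (e : rel 'I_n) (S : {set 'I_n}) v u1 u2 :
  deg_in e S v <= 1 -> u1 \in S -> e v u1 -> u2 \in S -> e v u2 -> u1 = u2.
Proof.
move=> Hd u1S e1 u2S e2; apply/eqP; apply: contraLR Hd => H; rewrite -ltnNge.
have -> : 2 = #|[set u1; u2]| by rewrite cards2 H.
apply: subset_leq_card; apply/subsetP => z; rewrite !inE.
by case/orP => /eqP ->; rewrite ?u1S ?e1 ?u2S ?e2.
Qed.

Lemma deg_le n (e : rel 'I_n) (S : {set 'I_n}) u : deg_in e S u <= deg e u.
Proof.
by apply: subset_leq_card; apply/subsetP => z; rewrite !inE => /andP[].
Qed.

Lemma step_vertex n (e : rel 'I_n) (S : {set 'I_n}) v K r col' : symmetric e ->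
  0 < K -> (forall u, deg_in e S u <= K) -> v \in S -> deg_in e S v <= 1 ->
  col_ok e (S :\ v) K r col' -> exists col, col_ok e S K r col.
Proof.
move=> Se K0 Hdeg vS Hd1 [s1 s2 s3 s4].
set S' := S :\ v.
have vS' : v \notin S' by rewrite !inE eqxx.
have sS : S' \subset S by apply: subsetDl.
have [a aK Ha] : exists2 a, a < K & forall u w, u \in S -> e v u -> w \in S' ->
    e u w -> col' u w != a.
  case: (pickP [pred u | (u \in S) && e v u]) => [u /andP[uS evu] | H0].
    have HA : size (acol e S' col' u) < K.
      rewrite acol_size; apply: leq_trans (Hdeg u).
      by apply: deg_lt sS vS vS' _; rewrite Se.
    have [a aK aA] := free_color HA; exists a => // u' w u'S evu' wS euw.
    rewrite (nbr_uniq Hd1 u'S evu' uS evu).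
    apply: contraNneq aA => <-; apply: acol_mem => //.
    by rewrite -(nbr_uniq Hd1 u'S evu' uS evu).
  exists 0 => // u w uS evu.
  by have := H0 u; rewrite /= uS evu.
have hS : forall x y, erel_in e S x y -> x != v -> y != v -> erel_in e S' x y.
  by move=> x y /and3P[xS yS exy] xv yv; rewrite /erel_in !inE xv yv xS yS exy.
exists (fun x y => if (x == v) || (y == v) then a else col' x y); split.
- move=> x y H; rewrite orbC; case: ifP => // /negbT; rewrite negb_or.
  by case/andP=> yv xv; apply: s1; apply: hS.
- move=> x y H; case: ifP => // /negbT; rewrite negb_or.
  by case/andP=> xv yv; apply: s2; apply: hS.
- move=> x y z Hxy Hxz yz.
  have [xS yS exy] := and3P Hxy; have [_ zS exz] := and3P Hxz.
  case: (x =P v) => [xv | /eqP xv].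
    by move: yz; rewrite (nbr_uniq Hd1 yS _ zS) -?xv ?eqxx.
  rewrite /=.
  case: (y =P v) => [yv | /eqP yv]; case: (z =P v) => [zv|/eqP zv].
  + by move: yz; rewrite yv zv eqxx.
  + rewrite eq_sym; apply: Ha => //; first by rewrite -yv Se.
    by rewrite !inE zv.
  + by apply: Ha => //; [rewrite -zv Se | rewrite !inE yv].
  + by apply: s3 => //; apply: hS.
- move=> c Hc; have [Uc _ _] := cyc_facts Hc.
  have Hv : forall u, u \in c -> u != v.
    move=> u uc; apply/eqP => uv.
    by have := cyc_deg2 Se Hc uc; rewrite uv => /leq_trans/(_ Hd1).
  have HS : all (mem S') c.
    by apply/allP => u uc; rewrite /= !inE Hv // (cyc_inS Hc uc).
  rewrite (@cc_eq _ _ col' c Uc); first exact: s4 (cycle_restrict Hc HS).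
  by move=> x y xc yc; rewrite (negbTE (Hv x xc)) (negbTE (Hv y yc)).
Qed.


Lemma two_nbrs n (e : rel 'I_n) (S : {set 'I_n}) u a b w :
  deg_in e S u = 2 -> a != b -> a \in S -> b \in S -> e u a -> e u b ->
  w \in S -> e u w -> w = a \/ w = b.
Proof.
move=> Hd ab aS bS ea eb wS ew.
have E : [set z in S | e u z] == [set a; b].
  rewrite eq_sym eqEcard cards2 ab -/(deg_in e S u) Hd andbT.
  by apply/subsetP => z; rewrite !inE => /orP[] /eqP ->; rewrite ?aS ?ea ?bS ?eb.
have : w \in [set z in S | e u z] by rewrite inE wS ew.
by rewrite (eqP E) !inE => /orP[] /eqP ->; [left|right].
Qed.

Lemma step_ear n (e : rel 'I_n) (S : {set 'I_n}) x y s K r col' : symmetric e ->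
  (forall u, deg_in e S u <= K) -> 3 <= r -> r <= K -> x != y ->
  path (erel_in e S) x (rcons s y) -> x \in S -> uniq (x :: rcons s y) ->
  all (fun v => deg_in e S v == 2) s -> r.+1 <= (size s).+1 ->
  col_ok e (S :\: [set v in s]) K r col' -> exists col, col_ok e S K r col.
Proof.
move=> Se Hdeg r3 rK xy Hp xS UP Hdeg2 Hrs [s1 s2 s3 s4].
set P := x :: rcons s y; set m := size s; set S' := S :\: [set v in s].
have m3 : 3 <= m by rewrite /m; lia.
have sizeP : size P = m.+2 by rewrite /= size_rcons.
have Pn : forall k, k < m -> nth x P k.+1 = nth x s k.
  by move=> k Hk; rewrite /= nth_rcons Hk.
have Pend : nth x P m.+1 = y by rewrite /= nth_rcons ltnn eqxx.
have Pinj : forall i k, i < m.+2 -> k < m.+2 -> nth x P i = nth x P k -> i = k.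
  by move=> i k Hi Hk /eqP; rewrite nth_uniq ?sizeP // => /eqP.
have idxP : forall k, k < m.+2 -> index (nth x P k) P = k.
  by move=> k Hk; rewrite index_uniq ?sizeP.
have Ed : forall k, k <= m -> erel_in e S (nth x P k) (nth x P k.+1).
  by move=> k Hk; move/(pathP x): Hp; apply; rewrite size_rcons ltnS.
have xs : x \notin s.
  by move: UP; rewrite /P /= mem_rcons inE negb_or => /andP[/andP[]].
have ys : y \notin s.
  by move: UP; rewrite /P /= rcons_uniq => /andP[_ /andP[]].
have inS : forall k, k < m.+2 -> nth x P k \in S.
  move=> k Hk; case: k Hk => [|k] Hk; first by [].
  by have /and3P[] := Ed k Hk.
have internal : forall j, 0 < j <= m -> nth x P j \in s.
  move=> [|j] // /andP[_ Hj]; by rewrite Pn ?mem_nth.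
have sP : forall u, u \in s -> exists2 j, 0 < j <= m & u = nth x P j.
  move=> u us; exists (index u s).+1; first by rewrite /= index_mem.
  by rewrite Pn ?index_mem // nth_index.
have notin_s : forall k, k < m.+2 -> nth x P k \notin s -> k = 0 \/ k = m.+1.
  move=> k Hk Hn; case: (posnP k) => [-> | k0]; first by left.
  right; apply/eqP; apply: contraNT Hn => H; apply: internal; lia.
have nbrP : forall j w, 0 < j <= m -> w \in S -> e (nth x P j) w ->
    w = nth x P j.-1 \/ w = nth x P j.+1.
  move=> j w Hj wS ew.
  have Hd : deg_in e S (nth x P j) = 2 by apply/eqP; move/allP: Hdeg2; apply; apply: internal.
  have E1 := Ed j.-1 (leq_trans (leq_pred _) (proj2 (andP Hj))).
  rewrite prednK in E1; last by case/andP: Hj.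
  have [a1 a2 a3] := and3P E1; have [b1 b2 b3] := and3P (Ed j (proj2 (andP Hj))).
  apply: (two_nbrs Hd) => //; last by rewrite Se.
  apply/eqP => E; case/andP: Hj => j0 jm.
  have := Pinj j.-1 j.+1; rewrite E => H.
  have : j.-1 = j.+1.
    have h1 : j.-1 < m.+2 by rewrite ltnS; apply: leq_trans (leq_pred _) (leqW jm).
    have h2 : j.+1 < m.+2 by rewrite ltnS ltnS.
    exact: H h1 h2 erefl.
  by move=> Hjj; clear -Hjj j0; lia.
have touch1 : forall u w, erel_in e S u w -> u \in s -> exists2 j, j <= m &
    (u = nth x P j /\ w = nth x P j.+1) \/ (u = nth x P j.+1 /\ w = nth x P j).
  move=> u w /and3P[uS wS euw] us; have [i Hi ui] := sP u us.
  case/andP: (Hi) => i0 im.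
  rewrite ui in euw; case: (nbrP i w Hi wS euw) => ->.
    by exists i.-1; [apply: leq_trans (leq_pred _) im | right; rewrite prednK].
  by exists i; [ | left].
have touch : forall u w, erel_in e S u w -> (u \in s) || (w \in s) -> exists2 j, j <= m &
    (u = nth x P j /\ w = nth x P j.+1) \/ (u = nth x P j.+1 /\ w = nth x P j).
  move=> u w H /orP[us | ws]; first exact: touch1.
  have H' : erel_in e S w u.
    by case/and3P: H => h1 h2 h3; rewrite /erel_in h1 h2 Se h3.
  by have [j Hj [[-> ->] | [-> ->]]] := touch1 w u H' ws; exists j => //; [right | left].
have sS : S' \subset S by apply: subsetDl.
have notS' : forall u, u \in s -> u \notin S' by move=> u us; rewrite !inE us.
have inS' : forall u, u \in S -> u \notin s -> u \in S' by move=> u uS us; rewrite !inE us uS.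
have yS : y \in S by rewrite -Pend; apply: inS.
have m0 : 0 < m by apply: leq_trans m3.
have HA : size (acol e S' col' x) < K.
  rewrite acol_size; apply: leq_trans (Hdeg x); apply: (@deg_lt _ _ _ _ _ (nth x P 1)) => //.
  - by apply: inS.
  - by apply: notS'; apply: internal; rewrite m0.
  - by have /and3P[] := Ed 0 (leq0n _).
have HB : size (acol e S' col' y) < K.
  rewrite acol_size; apply: leq_trans (Hdeg y); apply: (@deg_lt _ _ _ _ _ (nth x P m)) => //.
  - by apply: inS; apply: leqW.
  - by apply: notS'; apply: internal; rewrite m0 leqnn.
  - by have /and3P[_ _] := Ed m (leqnn _); rewrite Pend Se.
have [a aK aA] := free_color HA.
have [b bK bB] := free_color HB.
have Hrm : r <= m.-1.+1 by rewrite prednK.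
have [f [f0 fm fK fd [U [UU Ur Usub]]]] := @ear_colors K r m.-1 a b r3 rK Hrm aK bK.
rewrite prednK // in fm fK fd Usub.
pose col u w := if (u \in s) || (w \in s) then f (minn (index u P) (index w P)) else col' u w.
have colE : forall j, j <= m ->
    col (nth x P j) (nth x P j.+1) = f j /\ col (nth x P j.+1) (nth x P j) = f j.
  move=> j jm.
  have T : (nth x P j \in s) || (nth x P j.+1 \in s).
    case: (ltnP j m) => H.
      by rewrite (internal j.+1) ?orbT.
    have -> : j = m by apply/eqP; rewrite eqn_leq jm H.
    by rewrite internal // m0 leqnn.
  rewrite /col T orbC T !idxP ?ltnS ?(leqW jm) // minnC.
  by rewrite (minn_idPr (leqnSn j)).
have colT : forall u w, erel_in e S u w -> (u \in s) || (w \in s) ->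
    exists2 j, j <= m & col u w = f j.
  move=> u w H T; have [j jm [[-> ->] | [-> ->]]] := touch u w H T; exists j => //.
  - exact: (colE j jm).1.
  - exact: (colE j jm).2.
have hS' : forall u w, erel_in e S u w -> u \notin s -> w \notin s -> erel_in e S' u w.
  by move=> u w /and3P[uS wS euw] us ws; rewrite /erel_in !inS'.
have lt2 : forall j, j <= m -> j < m.+2 by move=> j jm; rewrite ltnS leqW.
have lt2' : forall j, j <= m -> j.+1 < m.+2 by move=> j jm; rewrite !ltnS.
have mixed : forall t y1 y2, erel_in e S t y1 -> erel_in e S t y2 ->
    (t \in s) || (y1 \in s) -> ~~ ((t \in s) || (y2 \in s)) -> col t y1 != col t y2.
  move=> t y1 y2 H1 H2 T1 T2.
  have E2 : col t y2 = col' t y2 by rewrite /col (negbTE T2).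
  move: T2; rewrite negb_or => /andP[ts y2s].
  have [_ y2S ety2] := and3P H2.
  have y2S' := inS' _ y2S y2s.
  have [j jm [[tj y1j] | [tj y1j]]] := touch t y1 H1 T1.
  - have j0 : j = 0.
      have := notin_s j (lt2 j jm); rewrite -tj => /(_ ts) [//|jm1].
      by move: jm; rewrite jm1 ltnn.
    have tx : t = x by rewrite tj j0.
    rewrite E2; have -> : col t y1 = f j by rewrite tj y1j (colE j jm).1.
    rewrite j0 f0 tx; apply: contraNneq aA => ->; apply: acol_mem => //.
    by rewrite -tx.
  - have jm' : j = m.
      have := notin_s j.+1 (lt2' j jm); rewrite -tj => /(_ ts) [//|/eqP].
      by rewrite eqSS => /eqP.
    have tx : t = y by rewrite tj jm' Pend.
    rewrite E2; have -> : col t y1 = f j by rewrite tj y1j (colE j jm).2.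
    rewrite jm' fm tx; apply: contraNneq bB => ->; apply: acol_mem => //.
    by rewrite -tx.
exists col; split.
- move=> u w H; rewrite /col orbC minnC; case: ifP => // /negbT.
  by rewrite negb_or => /andP[ws us]; apply: s1; apply: hS'.
- move=> u w H; case: (boolP ((u \in s) || (w \in s))) => T.
    by have [j jm ->] := colT u w H T; apply: fK; rewrite ltnS.
  by rewrite /col (negbTE T); move: T; rewrite negb_or => /andP[us ws]; apply: s2; apply: hS'.
- move=> t y1 y2 H1 H2 ne.
  case: (boolP ((t \in s) || (y1 \in s))) => T1; case: (boolP ((t \in s) || (y2 \in s))) => T2.
  + have [j1 jm1 D1] := touch t y1 H1 T1.
    have [j2 jm2 D2] := touch t y2 H2 T2.
    case: D1 => [[t1 e1]|[t1 e1]]; case: D2 => [[t2 e2]|[t2 e2]].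
    * rewrite t1 in t2; have := Pinj _ _ (lt2 _ jm1) (lt2 _ jm2) t2.
      by move=> E; move: ne; rewrite e1 e2 E eqxx.
    * rewrite {1}t1 e1 (colE j1 jm1).1 t2 e2 (colE j2 jm2).2.
      rewrite t2 in t1; have E : j1 = j2.+1 by apply: (Pinj _ _ (lt2 _ jm1) (lt2' _ jm2)); rewrite t1.
      by rewrite E eq_sym; apply: fd; rewrite -E.
    * rewrite {1}t1 e1 (colE j1 jm1).2 t2 e2 (colE j2 jm2).1.
      rewrite t2 in t1; have E : j2 = j1.+1 by apply: (Pinj _ _ (lt2 _ jm2) (lt2' _ jm1)).
      by rewrite E; apply: fd; rewrite -E.
    * rewrite t1 in t2; have := Pinj _ _ (lt2' _ jm1) (lt2' _ jm2) t2.
      by move=> /eqP; rewrite eqSS => /eqP E; move: ne; rewrite e1 e2 E eqxx.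
  + exact: mixed.
  + by rewrite eq_sym; apply: mixed.
  + rewrite /col (negbTE T1) (negbTE T2).
    move: T1 T2; rewrite !negb_or => /andP[ts y1s] /andP[_ y2s].
    by apply: s3 => //; apply: hS'.
- move=> c Hc; have [Uc _ _] := cyc_facts Hc.
  case: (boolP (all (mem S') c)) => HS.
    rewrite (@cc_eq _ col col' c Uc); first exact: s4 (cycle_restrict Hc HS).
    have nS : forall u, u \in c -> u \notin s.
      move=> u uc; apply: contraTN (allP HS u uc) => us; exact: notS'.
    by move=> u w uc wc; rewrite /col (negbTE (nS u uc)) (negbTE (nS w wc)).
  move/allPn: HS => [w wc wS'].
  have ws : w \in s.
    apply: contraNT wS' => ws; exact: inS' _ (cyc_inS Hc wc) ws.
  have Hsub := ear_in_cycle Se Hp Hdeg2 Hc (ex_intro2 _ _ w ws wc).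
  have inc : forall k, k < m.+2 -> nth x P k \in c.
    by move=> k Hk; apply: Hsub; apply: mem_nth; rewrite sizeP.
  have Fin : forall j, j <= m -> f j \in cycle_colors col c.
    move=> j jm; have [Hj1 Hj2] := colE j jm.
    have [a1 a2 a3] := and3P (Ed j jm).
    case: (posnP j) => [j0 | j0].
      rewrite -Hj2; apply: (cc_edge Se Hc) => //.
      + by apply: inc; apply: lt2'.
      + by apply/eqP; move/allP: Hdeg2; apply; apply: internal; rewrite j0.
      + by rewrite Se.
      + by rewrite Hj1 Hj2.
    rewrite -Hj1; apply: (cc_edge Se Hc) => //.
    + by apply: inc; apply: lt2.
    + by apply/eqP; move/allP: Hdeg2; apply; apply: internal; rewrite j0.
    + by rewrite Hj1 Hj2.
  apply: leq_trans Ur _; apply: (uniq_leq_size UU) => z zU; rewrite mem_undup.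
  have := Usub z zU => /mapP [j]; rewrite mem_iota add0n => Hj ->.
  by apply: Fin; rewrite -ltnS.
Qed.


Lemma build n (e : rel 'I_n) (S : {set 'I_n}) K r : symmetric e -> 3 <= r -> r <= K ->
  (forall u, deg e u <= K) -> reducible e r.+1 S -> exists col, col_ok e S K r col.
Proof.
move=> Se r3 rK HK; elim => [|{}S S' Hred _ [col' Hok]].
  exists (fun _ _ => 0); split; try by move=> ? ?; rewrite /erel_in inE.
  move=> [|u c] Hc; first by have [_ _] := cyc_facts Hc.
  by have [_ H _ _ _] := cyc_nbrs Hc (mem_head u c); rewrite inE in H.
have HdS : forall u, deg_in e S u <= K by move=> u; apply: leq_trans (deg_le e S u) (HK u).
case: Hred => [[v vS [Hd E]] | [x [y [s [xy /andP[Hp xS] /andP[Us Hdeg] Hps E]]]]].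
  rewrite E in Hok; apply: step_vertex Se _ HdS vS Hd Hok.
  by apply: leq_trans rK; apply: leq_trans r3.
rewrite E in Hok; exact: step_ear Se HdS r3 rK xy Hp xS Us Hdeg Hps Hok.
Qed.

Lemma erelT n (e : rel 'I_n) : erel_in e [set: 'I_n] =2 e.
Proof. by move=> x y; rewrite /erel_in !in_setT. Qed.

Lemma is_cycleT n (e : rel 'I_n) c : is_cycle (erel_in e [set: 'I_n]) c = is_cycle e c.
Proof. by rewrite /is_cycle /ucycleb (eq_cycle (erelT e)). Qed.

Theorem mainTheorem15 (r : nat) (C : graph_class) (g : nat) :
  3 <= r ->
  (forall n (e : rel 'I_n), C n e -> sgraph e) ->
  subexp_expansion C ->
  (forall n (e : rel 'I_n), C n e -> girth_ge e g -> path_degenerate e r.+1) ->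
  forall n (e : rel 'I_n), C n e ->
    3 <= maxdeg e -> girth_ge e g -> ~ forest e ->
    arc_index_is e r (maxn (maxdeg e) r).
Proof.
move=> r3 Hsg _ Hpd n e HC Hmax Hg Hnf.
have [Se Ie] := Hsg n e HC.
have Hred : reducible e r.+1 [set: 'I_n] := Hpd n e HC Hg.
set K := maxn (maxdeg e) r.
split.
  have rK : r <= K by apply: leq_maxr.
  have HK : forall u, deg e u <= K.
    move=> u; apply: leq_trans (leq_maxl _ r).
    by apply: (leq_bigmax (F := deg e) u).
  have [col [s1 s2 s3 s4]] := build Se r3 rK HK Hred.
  exists col; split.
  - by move=> x y H; apply: s1; rewrite erelT.
  - by move=> x y H; apply: s2; rewrite erelT.
  - by move=> x y z H1 H2; apply: s3; rewrite erelT.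
  - move=> c Hc; apply: leq_trans (geq_minr _ _) _; apply: s4.
    by rewrite is_cycleT.
move=> k [col [c1 c2 c3 c4]].
have Hdk : forall v, deg e v <= k.
  move=> v; rewrite /deg cardE -(size_map (col v)) -(size_iota 0 k).
  apply: uniq_leq_size.
    rewrite map_inj_in_uniq ?enum_uniq // => a b; rewrite !mem_enum !inE => ea eb.
    move=> E; case: (eqVneq a b) => // ab.
    by move: (c3 v a b ea eb ab); rewrite E eqxx.
  move=> z /mapP[w]; rewrite mem_enum inE => ew ->.
  by rewrite mem_iota add0n c2.
have [c Hc] : exists c, is_cycle e c.
  apply: NNPP => H; apply: Hnf => c; apply/negP => Hc; apply: H; by exists c.
have Hlong : r.+1 <= size c.
  by apply: (cycle_long Se Hred); rewrite is_cycleT.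
rewrite geq_max; apply/andP; split.
  by apply/bigmax_leqP => v _; apply: Hdk.
have := c4 c Hc; rewrite (minn_idPr (ltnW Hlong)) => H; apply: leq_trans H _.
have [Uc Cc _] := cyc_facts Hc.
rewrite -(size_iota 0 k); apply: uniq_leq_size; first exact: undup_uniq.
move=> z; rewrite mem_undup => /mapP[p /(zip_next Uc)[p1 p2] ->].
by rewrite mem_iota add0n; apply: c2; rewrite p2; apply: next_cycle.
Qed.
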